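(* Let $\mathcal{X}$ be a separable infinite-dimensional complex Banach space, $T\in\mathcal{B}(\mathcal{X})$, and $\mathcal{M}$ a nontrivial closed subspace of $\mathcal{X}$. If $T$ is $\mathcal{M}$-disk transitive, then $T$ is $\mathcal{M}$-diskcyclic.
   Context: $\mathbb{N}=\{0,1,2,\dots\}$, $\mathbb{D}=\{\alpha\in\mathbb{C}:|\alpha|\le1\}$. $T$ is $\mathcal{M}$-disk transitive if for any two nonempty relatively open sets $U,V$ in $\mathcal{M}$ there exist $n\in\mathbb{N}$ and $\alpha\in\mathbb{C}$ with $|\alpha|\ge1$ such that $T^{-n}(\alpha U)\cap V$ (with $T^{-n}(A)=\{x:T^nx\in A\}$) contains a nonempty relatively open subset of $\mathcal{M}$. $T$ is $\mathcal{M}$-diskcyclic if there is $x\in\mathcal{X}$ with $\{\alpha T^nx:\alpha\in\mathbb{D},n\in\mathbb{N}\}\cap\mathcal{M}$ dense in $\mathcal{M}$. *)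

(* Defs.v *)
From Stdlib Require Import Reals.
Open Scope R_scope.

Definition C : Type := (R * R)%type.
Definition C0 : C := (0, 0).
Definition C1 : C := (1, 0).
Definition Cadd (a b : C) : C := (fst a + fst b, snd a + snd b).
Definition Cmul (a b : C) : C :=
  (fst a * fst b - snd a * snd b, fst a * snd b + snd a * fst b).
Definition Cmod (a : C) : R := sqrt (fst a * fst a + snd a * snd a).

Record CBanach : Type := {
  car :> Type;
  vadd : car -> car -> car;
  vzero : car;
  vopp : car -> car;
  vscal : C -> car -> car;
  vnorm : car -> R;
  vadd_assoc : forall x y z, vadd x (vadd y z) = vadd (vadd x y) z;
  vadd_comm : forall x y, vadd x y = vadd y x;
  vadd_0 : forall x, vadd x vzero = x;
  vadd_opp : forall x, vadd x (vopp x) = vzero;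
  vscal_assoc : forall a b x, vscal a (vscal b x) = vscal (Cmul a b) x;
  vscal_1 : forall x, vscal C1 x = x;
  vscal_distr_l : forall a b x, vscal (Cadd a b) x = vadd (vscal a x) (vscal b x);
  vscal_distr_r : forall a x y, vscal a (vadd x y) = vadd (vscal a x) (vscal a y);
  vnorm_nonneg : forall x, 0 <= vnorm x;
  vnorm_eq0 : forall x, vnorm x = 0 -> x = vzero;
  vnorm_triangle : forall x y, vnorm (vadd x y) <= vnorm x + vnorm y;
  vnorm_scal : forall a x, vnorm (vscal a x) = Cmod a * vnorm x;
  vcomplete : forall u : nat -> car,
      (forall eps, 0 < eps -> exists N, forall m n, (N <= m)%nat -> (N <= n)%nat ->
          vnorm (vadd (u m) (vopp (u n))) < eps) ->
      exists l, forall eps, 0 < eps -> exists N, forall n, (N <= n)%nat ->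
          vnorm (vadd (u n) (vopp l)) < eps
}.

Arguments vadd {_}. Arguments vzero {_}. Arguments vopp {_}.
Arguments vscal {_}. Arguments vnorm {_}.

Definition vdist {X : CBanach} (x y : X) : R := vnorm (vadd x (vopp y)).

Fixpoint lincomb {X : CBanach} (n : nat) (c : nat -> C) (v : nat -> X) : X :=
  match n with
  | O => vzero
  | S k => vadd (lincomb k c v) (vscal (c k) (v k))
  end.

Definition separable (X : CBanach) : Prop :=
  exists d : nat -> X, forall (x : X) (eps : R), 0 < eps -> exists k, vdist (d k) x < eps.

Definition infinite_dimensional (X : CBanach) : Prop :=
  forall (n : nat) (v : nat -> X), exists x : X, forall c : nat -> C, x <> lincomb n c v.

Definition bounded_linear {X : CBanach} (T : X -> X) : Prop :=
  (forall x y, T (vadd x y) = vadd (T x) (T y)) /\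
  (forall a x, T (vscal a x) = vscal a (T x)) /\
  (exists K : R, forall x, vnorm (T x) <= K * vnorm x).

Definition closed_subspace {X : CBanach} (M : X -> Prop) : Prop :=
  M vzero /\
  (forall x y, M x -> M y -> M (vadd x y)) /\
  (forall a x, M x -> M (vscal a x)) /\
  (forall (u : nat -> X) (l : X), (forall n, M (u n)) ->
     (forall eps, 0 < eps -> exists N, forall n, (N <= n)%nat -> vdist (u n) l < eps) ->
     M l).

Definition nontrivial_subspace {X : CBanach} (M : X -> Prop) : Prop :=
  (exists x, M x /\ x <> vzero) /\ (exists x, ~ M x).

Definition rel_open {X : CBanach} (M U : X -> Prop) : Prop :=
  (forall x, U x -> M x) /\
  (forall x, U x -> exists eps, 0 < eps /\ forall y, M y -> vdist y x < eps -> U y).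

Definition nonempty {X : Type} (U : X -> Prop) : Prop := exists x, U x.

Definition preimage_iter {X : CBanach} (T : X -> X) (n : nat) (A : X -> Prop) : X -> Prop :=
  fun x => A (Nat.iter n T x).

Definition scal_set {X : CBanach} (a : C) (U : X -> Prop) : X -> Prop :=
  fun y => exists u, U u /\ y = vscal a u.

Definition M_disk_transitive {X : CBanach} (T : X -> X) (M : X -> Prop) : Prop :=
  forall U V : X -> Prop,
    rel_open M U -> nonempty U -> rel_open M V -> nonempty V ->
    exists (n : nat) (a : C), 1 <= Cmod a /\
      exists W : X -> Prop, rel_open M W /\ nonempty W /\
        (forall x, W x -> preimage_iter T n (scal_set a U) x /\ V x).

Definition M_diskcyclic {X : CBanach} (T : X -> X) (M : X -> Prop) : Prop :=
  exists x : X,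
    forall (y : X) (eps : R), M y -> 0 < eps ->
      exists (a : C) (n : nat), Cmod a <= 1 /\
        M (vscal a (Nat.iter n T x)) /\ vdist (vscal a (Nat.iter n T x)) y < eps.

(* Main.v *)
Require Import Defs.
From Stdlib Require Import Reals Lra ClassicalEpsilon Classical Cantor.
Open Scope R_scope.

Section Alg.
Variable X : CBanach.

Lemma vadd_0l (x : X) : vadd vzero x = x.
Proof. rewrite vadd_comm; apply vadd_0. Qed.

Lemma opp_unique (a b : X) : vadd a b = vzero -> b = vopp a.
Proof.
  intro H. rewrite <- (vadd_0 _ b), <- (vadd_opp _ a), vadd_assoc, (vadd_comm _ b a), H.
  apply vadd_0l.
Qed.

Lemma scal0 (z : X) : vscal (0,0) z = vzero.
Proof.
  set (w := vscal (0,0) z).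
  assert (Hw : w = vadd w w).
  { unfold w. rewrite <- vscal_distr_l. unfold Cadd; simpl. f_equal; f_equal; ring. }
  rewrite <- (vadd_opp _ w). rewrite Hw at 2.
  rewrite <- vadd_assoc, vadd_opp, vadd_0. reflexivity.
Qed.

Lemma opp_scal (z : X) : vopp z = vscal (-1,0) z.
Proof.
  symmetry. apply opp_unique.
  rewrite <- (vscal_1 _ z) at 1. rewrite <- vscal_distr_l.
  unfold Cadd, Defs.C1; simpl. rewrite <- (scal0 z). f_equal; f_equal; ring.
Qed.

Lemma vnorm_opp (z : X) : vnorm (vopp z) = vnorm z.
Proof.
  rewrite opp_scal, vnorm_scal. unfold Cmod; simpl.
  replace (-1 * -1 + 0 * 0) with 1 by ring. rewrite sqrt_1. ring.
Qed.

Lemma vnorm_zero : vnorm (@vzero X) = 0.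
Proof.
  rewrite <- (scal0 vzero), vnorm_scal. unfold Cmod; simpl.
  replace (0*0+0*0) with 0 by ring. rewrite sqrt_0. ring.
Qed.

Lemma vdist_refl (x : X) : vdist x x = 0.
Proof. unfold vdist. rewrite vadd_opp. apply vnorm_zero. Qed.

Lemma vdist_sym (x y : X) : vdist x y = vdist y x.
Proof.
  unfold vdist. rewrite <- (vnorm_opp (vadd y (vopp x))). f_equal.
  apply opp_unique.
  rewrite <- vadd_assoc. rewrite (vadd_assoc _ (vopp x) x (vopp y)).
  rewrite (vadd_comm _ (vopp x) x), vadd_opp, vadd_0l, vadd_opp.
  reflexivity.
Qed.

Lemma vdist_tri (x y z : X) : vdist x z <= vdist x y + vdist y z.
Proof.
  unfold vdist. eapply Rle_trans; [|apply vnorm_triangle]. right. f_equal.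
  rewrite <- vadd_assoc. rewrite (vadd_assoc _ (vopp y) y (vopp z)).
  rewrite (vadd_comm _ (vopp y) y), vadd_opp, vadd_0l. reflexivity.
Qed.

Lemma vdist_nonneg (x y : X) : 0 <= vdist x y.
Proof. apply vnorm_nonneg. Qed.

End Alg.
Section Baire.
Variable X : CBanach.
Variable M : X -> Prop.
Variable Ok : nat -> X -> Prop.
Hypothesis HM : closed_subspace M.
Hypothesis Hopen : forall k x, Ok k x -> M x /\ exists s, 0 < s /\ forall y, M y -> vdist y x < s -> Ok k y.
Hypothesis Hdense : forall k y r, M y -> 0 < r -> exists z, Ok k z /\ vdist z y < r.

Definition Pst (k : nat) (p q : X * R) : Prop :=
  M (fst q) /\ 0 < snd q /\ vdist (fst q) (fst p) + snd q <= snd p /\ snd q <= snd p / 2 /\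
  (forall y, M y -> vdist y (fst q) <= snd q -> Ok k y).

Lemma Pst_ex k p : M (fst p) -> 0 < snd p -> exists q, Pst k p q.
Proof.
  destruct p as [x r]; simpl; intros Hx Hr.
  destruct (Hdense k x (r/2) Hx) as [z [Oz Dz]]; [lra|].
  destruct (Hopen k z Oz) as [Mz [s [Hs Hball]]].
  exists (z, Rmin (s/2) (r/2)). unfold Pst; simpl.
  repeat split; auto.
  - apply Rmin_pos; lra.
  - pose proof (Rmin_r (s/2) (r/2)); lra.
  - apply Rmin_r.
  - intros y My Dy. apply Hball; auto. pose proof (Rmin_l (s/2) (r/2)); lra.
Qed.

Definition nxt (k : nat) (p : X * R) : X * R := epsilon (inhabits p) (Pst k p).

Fixpoint sq (k : nat) : X * R :=
  match k with O => (vzero, 1) | S k => nxt k (sq k) end.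

Lemma sq_spec k : M (fst (sq k)) /\ 0 < snd (sq k) /\ Pst k (sq k) (sq (S k)).
Proof.
  induction k as [|k IH].
  - simpl. assert (M vzero /\ 0 < 1) as [H1 H2] by (split; [apply HM | lra]).
    split; [|split]; auto. cbn [sq]; unfold nxt. apply (epsilon_spec (inhabits _)). apply Pst_ex; auto.
  - destruct IH as [_ [_ HP]]. destruct HP as [H1 [H2 _]].
    split; [|split]; auto. cbn [sq]; unfold nxt. apply (epsilon_spec (inhabits _)). apply Pst_ex; auto.
Qed.

Lemma sq_rad k : snd (sq k) <= (/2)^k.
Proof.
  induction k as [|k IH]; simpl.
  - lra.
  - destruct (sq_spec k) as [_ [_ [_ [_ [_ [H _]]]]]]. simpl in H. lra.
Qed.

Lemma sq_nest n m : (n <= m)%nat -> vdist (fst (sq m)) (fst (sq n)) + snd (sq m) <= snd (sq n).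
Proof.
  induction 1 as [|m Hnm IH].
  - rewrite vdist_refl. lra.
  - destruct (sq_spec m) as [_ [_ [_ [_ [H _]]]]].
    pose proof (vdist_tri _ (fst (sq (S m))) (fst (sq m)) (fst (sq n))). lra.
Qed.

Lemma baire : exists x, forall k, Ok k x.
Proof.
  assert (Hcau : forall eps, 0 < eps -> exists N, forall m n, (N <= m)%nat -> (N <= n)%nat ->
          vnorm (vadd (fst (sq m)) (vopp (fst (sq n)))) < eps).
  { intros eps He.
    destruct (pow_lt_1_zero (/2) ltac:(rewrite Rabs_pos_eq; lra) (eps/2) ltac:(lra)) as [N HN].
    exists N. intros m n Hm Hn.
    pose proof (HN N (le_n N)). rewrite Rabs_pos_eq in H by (apply pow_le; lra).
    pose proof (sq_rad N). pose proof (sq_nest N m Hm). pose proof (sq_nest N n Hn).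
    pose proof (vdist_tri _ (fst (sq m)) (fst (sq N)) (fst (sq n))).
    rewrite (vdist_sym _ (fst (sq N)) (fst (sq n))) in *.
    destruct (sq_spec m) as [_ [Hm' _]]. destruct (sq_spec n) as [_ [Hn' _]].
    unfold vdist in *. lra. }
  destruct (vcomplete X (fun n => fst (sq n)) Hcau) as [l Hl].
  assert (Ml : M l).
  { destruct HM as [_ [_ [_ Hc]]]. apply (Hc (fun n => fst (sq n))).
    - intro n; apply sq_spec.
    - exact Hl. }
  exists l. intro k.
  destruct (sq_spec k) as [_ [_ [_ [_ [_ [_ Hb]]]]]].
  apply Hb; auto.
  destruct (Rle_or_lt (vdist l (fst (sq (S k)))) (snd (sq (S k)))) as [H|H]; auto.
  exfalso.
  destruct (Hl (vdist l (fst (sq (S k))) - snd (sq (S k))) ltac:(lra)) as [N HN].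
  pose proof (HN (max N (S k)) (Nat.le_max_l _ _)).
  pose proof (sq_nest (S k) (max N (S k)) (Nat.le_max_r _ _)).
  pose proof (vdist_tri _ l (fst (sq (max N (S k)))) (fst (sq (S k)))).
  rewrite (vdist_sym _ l (fst (sq (max N (S k))))) in H2. cbv beta in H0.
  destruct (sq_spec (max N (S k))) as [_ [Hp _]].
  unfold vdist in *. lra.
Qed.
End Baire.

Lemma ball_rel_open (X : CBanach) (M : X -> Prop) (c : X) (r : R) :
  rel_open M (fun v => M v /\ vdist v c < r).
Proof.
  split; [intros x [H _]; exact H|].
  intros x [Mx Dx]. exists (r - vdist x c). split; [lra|].
  intros y My Dy. split; auto. pose proof (vdist_tri _ y x c). lra.
Qed.

Lemma Cinv_ex (a : Defs.C) : 1 <= Cmod a -> exists b, Cmod b <= 1 /\ Cmul b a = Defs.C1.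
Proof.
  destruct a as [p q]. unfold Cmod; simpl. intro H.
  set (d := p*p+q*q).
  assert (Hd0 : 0 <= d) by (unfold d; nra).
  assert (Hd : 1 <= d).
  { destruct (Rle_or_lt 1 d) as [h|h]; auto.
    assert (sqrt d < 1). { rewrite <- sqrt_1. apply sqrt_lt_1; lra. } fold d in H. lra. }
  exists (p/d, -q/d). split.
  - unfold Cmod; simpl. rewrite <- sqrt_1. apply sqrt_le_1_alt.
    replace (p / d * (p / d) + - q / d * (- q / d)) with (/d) by (unfold d in *; field; lra).
    rewrite <- Rinv_1. apply Rinv_le_contravar; lra.
  - unfold Cmul, Defs.C1; simpl. f_equal; unfold d in *; field; lra.
Qed.

Theorem mainTheorem5 (X : CBanach) (T : X -> X) (M : X -> Prop) :
  separable X -> infinite_dimensional X -> bounded_linear T ->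
  closed_subspace M -> nontrivial_subspace M ->
  M_disk_transitive T M -> M_diskcyclic T M.
Proof.
  intros [d Hd] _ _ HM _ Htr.
  set (Vk := fun k v => M v /\ vdist v (d (fst (of_nat k))) < (/2) ^ (snd (of_nat k))).
  set (Ok := fun k x => M x /\ (~ nonempty (Vk k) \/ exists n a W, 1 <= Cmod a /\ rel_open M W /\ W x /\
              forall w, W w -> preimage_iter T n (scal_set a (Vk k)) w)).
  destruct (baire X M Ok HM) as [x Hx].
  - intros k z [Mz Hz]. split; auto. destruct Hz as [Hz|[n [a [W [Ha [HW [Wz HWp]]]]]]].
    + exists 1. split; [lra|]. intros y My _. split; auto.
    + destruct HW as [HW1 HW2]. destruct (HW2 z Wz) as [e [He Hb]].
      exists e. split; auto. intros y My Dy. split; auto. right.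
      exists n, a, W. repeat split; auto.
  - intros k y r My Hr. destruct (classic (nonempty (Vk k))) as [Hne|Hne].
    + destruct (Htr (Vk k) (fun v => M v /\ vdist v y < r)) as [n [a [Ha [W [HW [[w Ww] HWs]]]]]].
      * apply ball_rel_open.
      * exact Hne.
      * apply ball_rel_open.
      * exists y. split; auto. rewrite vdist_refl; lra.
      * exists w. destruct (HWs w Ww) as [_ [_ Dw]]. split; auto.
        split; [apply HW; auto|]. right. exists n, a, W. split; [exact Ha|split; [exact HW|split; [exact Ww|]]].
        intros w' Ww'. apply (HWs w' Ww').
    + exists y. split; [split; auto|]. rewrite vdist_refl; lra.
  - exists x. intros y eps My He.
    destruct (pow_lt_1_zero (/2) ltac:(rewrite Rabs_pos_eq; lra) (eps/2) ltac:(lra)) as [m Hm].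
    pose proof (Hm m (le_n m)) as Hm'. rewrite Rabs_pos_eq in Hm' by (apply pow_le; lra).
    destruct (Hd y ((/2)^m) ltac:(apply pow_lt; lra)) as [j Hj].
    destruct (Hx (to_nat (j, m))) as [_ [Hc|[n [a [W [Ha [_ [Wx HWp]]]]]]]].
    + exfalso. apply Hc. exists y. unfold Vk. rewrite cancel_of_to; simpl. split; auto.
      rewrite vdist_sym; auto.
    + destruct (HWp x Wx) as [u [Vu Hu]]. unfold Vk in Vu. rewrite cancel_of_to in Vu; simpl in Vu.
      destruct Vu as [Mu Du].
      destruct (Cinv_ex a Ha) as [b [Hb Hba]].
      assert (E : vscal b (Nat.iter n T x) = u).
      { rewrite Hu, vscal_assoc, Hba. apply vscal_1. }
      exists b, n. rewrite E. split; auto. split; auto.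
      pose proof (vdist_tri _ u (d j) y). lra.
Qed.
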